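(* Let $G=(V,E)$ be a graph on $V=\{1,\ldots,n\}$ and $b(\mathbf x)=\sum_{ij\in E}a_{ij}x_ix_j$ with real coefficients. Let $\mathbf x\in\{0,1/2,1\}^n$ and put $T_1=\{i\in V:x_i=1\}$, $T_f=\{i\in V:x_i=1/2\}$. Then \begin{align*} \operatorname{vex}[b](\mathbf x)&=a(\gamma(T_1))+\tfrac12a(\delta(T_1,T_f))+\tfrac12a(\gamma(T_f))-\tfrac12\mu^+(T_f),\\ \operatorname{cav}[b](\mathbf x)&=a(\gamma(T_1))+\tfrac12a(\delta(T_1,T_f))+\tfrac12a(\gamma(T_f))-\tfrac12\mu^-(T_f),\\ \operatorname{chgap}[b](\mathbf x)&=\tfrac12\left(\mu^+(T_f)-\mu^-(T_f)\right). \end{align*}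
   Context: $B=\{(\mathbf x,z)\in[0,1]^n\times\mathbb R:z=b(\mathbf x)\}$; $\operatorname{cav}[b](\mathbf x)=\max\{z:(\mathbf x,z)\in\operatorname{conv}(B)\}$, $\operatorname{vex}[b](\mathbf x)=\min\{z:(\mathbf x,z)\in\operatorname{conv}(B)\}$, $\operatorname{chgap}[b]=\operatorname{cav}[b]-\operatorname{vex}[b]$. For $X\subseteq V$, $\gamma(X)$ is the set of edges of $G$ with both endpoints in $X$; for disjoint $X,Y\subseteq V$, $\delta(X,Y)$ is the set of edges with one endpoint in $X$ and one in $Y$; for $Z\subseteq E$, $a(Z)=\sum_{ij\in Z}a_{ij}$. For $X\subseteq V$, $\mu^+(X)=\max\{a(\delta(U_1,U_2)):U_1\cup U_2=X,\ U_1\cap U_2=\emptyset\}$ and $\mu^-(X)=\min\{a(\delta(U_1,U_2)):U_1\cup U_2=X,\ U_1\cap U_2=\emptyset\}$ (maximum and minimum cut weights in the subgraph induced by $X$, with $U_1$ or $U_2$ allowed to be empty). *)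

(* Defs.v *)
From HB Require Import structures.
From mathcomp Require Import all_boot all_order all_algebra.
Set Implicit Arguments. Unset Strict Implicit. Unset Printing Implicit Defensive.
Import Order.TTheory GRing.Theory Num.Theory.
Local Open Scope ring_scope.

(* Graph G on vertex set 'I_n given by a relation E; the edge {i,j} is
   present iff (i < j) && E i j (each edge counted once, as the pair i<j).
   a i j (for i < j) is the coefficient a_ij. *)

Section Defs.
Variables (R : realFieldType) (n : nat) (E : rel 'I_n) (a : 'I_n -> 'I_n -> R).

Definition isedge (i j : 'I_n) : bool := ((i < j)%N && E i j).

Definition bilin (x : 'I_n -> R) : R :=
  \sum_(i < n) \sum_(j < n | isedge i j) a i j * x i * x j.

Definition a_gamma (X : {set 'I_n}) : R :=
  \sum_(i < n) \sum_(j < n | isedge i j && (i \in X) && (j \in X)) a i j.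

Definition a_delta (X Y : {set 'I_n}) : R :=
  \sum_(i < n) \sum_(j < n | isedge i j &&
      (((i \in X) && (j \in Y)) || ((i \in Y) && (j \in X)))) a i j.

Definition mu_plus (X : {set 'I_n}) : R :=
  \big[Num.max/a_delta set0 X]_(U in powerset X) a_delta U (X :\: U).
Definition mu_minus (X : {set 'I_n}) : R :=
  \big[Num.min/a_delta set0 X]_(U in powerset X) a_delta U (X :\: U).

(* (x,z) ∈ conv(B), B = graph of b over [0,1]^n: finite convex combination *)
Definition in_convB (x : 'I_n -> R) (z : R) : Prop :=
  exists (k : nat) (lam : 'I_k -> R) (p : 'I_k -> 'I_n -> R),
    [/\ forall t, 0 <= lam t,
        \sum_(t < k) lam t = 1,
        forall t i, 0 <= p t i <= 1,
        forall i, x i = \sum_(t < k) lam t * p t i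
      & z = \sum_(t < k) lam t * bilin (p t)].

Definition is_vex (x : 'I_n -> R) (v : R) : Prop :=
  in_convB x v /\ forall z, in_convB x z -> v <= z.
Definition is_cav (x : 'I_n -> R) (c : R) : Prop :=
  in_convB x c /\ forall z, in_convB x z -> z <= c.
End Defs.

(* Main.v *)
Require Import Defs.
From HB Require Import structures.
From mathcomp Require Import all_boot all_order all_algebra.
From mathcomp Require Import ring lra.
Set Implicit Arguments. Unset Strict Implicit. Unset Printing Implicit Defensive.
Import Order.TTheory GRing.Theory Num.Theory.
Local Open Scope ring_scope.

Section Aux.
Variables (R : realFieldType) (n : nat) (E : rel 'I_n) (a : 'I_n -> 'I_n -> R)
  (x : 'I_n -> R).
Hypothesis hx : forall i, [\/ x i = 0, x i = 2^-1 | x i = 1].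

Definition T1 := [set i | x i == 1].
Definition Tf := [set i | x i == 2^-1].
Definition al (i j : 'I_n) : R :=
  if (i \in Tf) && (j \in Tf) then 2^-1 else if i \in Tf then x j else 0.
Definition be (i j : 'I_n) : R :=
  if (i \in Tf) && (j \in Tf) then 2^-1 else if i \in Tf then 0 else x i.
Definition Lin (p : 'I_n -> R) : R :=
  \sum_(i < n) \sum_(j < n | isedge E i j) a i j * (al i j * p i + be i j * p j).
Definition G p := Lin p - bilin E a p.
Definition upd (p : 'I_n -> R) k v := fun i => if i == k then v else p i.

Lemma bilin_aff k p :
  bilin E a p = p k * bilin E a (upd p k 1) + (1 - p k) * bilin E a (upd p k 0).
Proof.
rewrite /bilin !mulr_sumr -big_split; apply eq_bigr => i _.
rewrite !mulr_sumr -big_split; apply eq_bigr => j /andP[lij _]; rewrite /upd.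
have ij : i != j by apply: contraTneq lij => ->; rewrite ltnn.
case: (eqVneq i k) ij => [->|ik]; case: (eqVneq j k) => [->|jk] //=; rewrite ?eqxx //.
- by move=> _; ring.
- by move=> _; ring.
- by move=> _; ring.
Qed.

Lemma Lin_aff k p :
  Lin p = p k * Lin (upd p k 1) + (1 - p k) * Lin (upd p k 0).
Proof.
rewrite /Lin !mulr_sumr -big_split; apply eq_bigr => i _.
rewrite !mulr_sumr -big_split; apply eq_bigr => j _; rewrite /upd.
case: (eqVneq i k) => [->|ik]; case: (eqVneq j k) => [->|jk] //=;
  rewrite ?eqxx ?(negbTE ik) ?(negbTE jk); ring.
Qed.

Lemma G_aff k p : G p = p k * G (upd p k 1) + (1 - p k) * G (upd p k 0).
Proof. rewrite /G (Lin_aff k p) (bilin_aff k p); ring. Qed.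

Lemma vertex (F : ('I_n -> R) -> R)
  (Faff : forall k p, F p = p k * F (upd p k 1) + (1 - p k) * F (upd p k 0))
  (S : {set 'I_n}) p :
  (forall i, i \in S -> 0 <= p i <= 1) ->
  (forall q, (forall i, i \in S -> (q i == 0) || (q i == 1)) ->
     (forall i, i \notin S -> q i = p i) -> 0 <= F q) -> 0 <= F p.
Proof.
move=> hb0 H0; have [m hm] : exists m, (#|S| <= m)%N by exists #|S|.
elim: m S p hm hb0 H0 => [|m IH] S p hS hb H.
  move: hS; rewrite leqn0 cards_eq0 => /eqP S0; apply: H => [i|//]; by rewrite S0 inE.
case: (set_0Vmem S) => [S0|[k kS]].
  apply: H => [i|//]; by rewrite S0 inE.
have hS' : (#|S :\ k| <= m)%N.
  by move: hS; rewrite (cardsD1 k S) kS add1n ltnS.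
have [p0 p1] := andP (hb k kS).
rewrite (Faff k p); apply: addr_ge0; apply: mulr_ge0; rewrite ?subr_ge0 //.
- apply: (IH (S :\ k)) => //.
    move=> i; rewrite in_setD1 => /andP[ik iS]; rewrite /upd (negbTE ik); exact: hb.
  move=> q hq hq'; apply: H.
    move=> i iS; case: (eqVneq i k) => [->|ik].
      by rewrite hq' ?in_setD1 ?eqxx //= /upd eqxx eqxx orbT.
    by apply: hq; rewrite in_setD1 ik.
  move=> i iS; have ik : i != k by apply: contraNneq iS => ->.
  by rewrite hq' ?in_setD1 ?(negbTE iS) ?andbF // /upd (negbTE ik).
- apply: (IH (S :\ k)) => //.
    move=> i; rewrite in_setD1 => /andP[ik iS]; rewrite /upd (negbTE ik); exact: hb.
  move=> q hq hq'; apply: H.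
    move=> i iS; case: (eqVneq i k) => [->|ik].
      by rewrite hq' ?in_setD1 ?eqxx //= /upd eqxx eqxx.
    by apply: hq; rewrite in_setD1 ik.
  move=> i iS; have ik : i != k by apply: contraNneq iS => ->.
  by rewrite hq' ?in_setD1 ?(negbTE iS) ?andbF // /upd (negbTE ik).
Qed.

Lemma half_neq1 : (2^-1 : R) != 1.
Proof. apply/eqP => h; lra. Qed.
Lemma half_neq0 : (2^-1 : R) != 0.
Proof. by rewrite invr_eq0 pnatr_eq0. Qed.

Lemma classify i :
  [\/ [/\ x i = 0, (i \in T1) = false & (i \in Tf) = false],
      [/\ x i = 2^-1, (i \in T1) = false & (i \in Tf) = true]
    | [/\ x i = 1, (i \in T1) = true & (i \in Tf) = false]].
Proof.
have h1 := half_neq1; have h0 := half_neq0.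
rewrite !inE; case: (hx i) => ->; [apply: Or31|apply: Or32|apply: Or33];
  split => //; rewrite ?eqxx //. 
- by rewrite eq_sym oner_eq0.
- by apply/negbTE; rewrite eq_sym.
- exact/negbTE.
- by apply/negbTE; rewrite eq_sym.
Qed.

Lemma mk2 (P : 'I_n -> 'I_n -> bool) (F : 'I_n -> 'I_n -> R) :
  \sum_(i < n) \sum_(j < n | P i j) F i j =
  \sum_(i < n) \sum_(j < n) (if P i j then F i j else 0).
Proof. apply eq_bigr => i _; exact: big_mkcond. Qed.

Lemma sumD2 (F1 F2 : 'I_n -> R) :
  \sum_(i < n) F1 i + \sum_(i < n) F2 i = \sum_(i < n) (F1 i + F2 i).
Proof. by rewrite big_split. Qed.

Definition base := a_gamma E a T1 + 2^-1 * a_delta E a T1 Tf + 2^-1 * a_gamma E a Tf.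

Lemma Lin_x : Lin x = base.
Proof.
transitivity (\sum_(i < n) \sum_(j < n)
  ((if isedge E i j && (i \in T1) && (j \in T1) then a i j else 0) +
   2^-1 * (if isedge E i j && (((i \in T1) && (j \in Tf)) || ((i \in Tf) && (j \in T1)))
           then a i j else 0) +
   2^-1 * (if isedge E i j && (i \in Tf) && (j \in Tf) then a i j else 0))).
  rewrite /Lin; apply eq_bigr => i _; rewrite big_mkcond; apply eq_bigr => j _ /=.
  case: (isedge E i j) => /=; first last. by ring.
  rewrite /al /be; case: (classify i) => -[-> -> ->]; case: (classify j) => -[-> -> ->] /=;
    field; rewrite ?pnatr_eq0 //.
under eq_bigr => i _ do rewrite !big_split /= -!mulr_sumr -!big_mkcond.
by rewrite !big_split /= -!mulr_sumr.
Qed.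

Lemma G_vert q (W : {set 'I_n}) : W \subset Tf ->
  (forall i, i \in Tf -> q i = if i \in W then 1 else 0) ->
  (forall i, i \notin Tf -> q i = x i) ->
  G q = 2^-1 * a_delta E a W (Tf :\: W).
Proof.
move=> hW hq1 hq2; have Wsub := subsetP hW.
rewrite /G /Lin /bilin /a_delta -sumrB mulr_sumr; apply eq_bigr => i _.
rewrite -sumrB mulr_sumr big_mkcond [in RHS]big_mkcond [X in _ = X]big_mkcond /=.
apply eq_bigr => j _ /=.
case: (isedge E i j) => /=; last by ring.
rewrite /al /be !in_setD.
case iT: (i \in Tf); case jT: (j \in Tf) => /=.
- rewrite (hq1 i iT) (hq1 j jT).
  by case: (i \in W); case: (j \in W) => /=; field; rewrite ?pnatr_eq0.
- have jW : (j \in W) = false by apply/negP => /Wsub; rewrite jT.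
  rewrite (hq1 i iT) (hq2 j) ?jT // jW /=.
  case: (i \in W); rewrite ?andbF ?andbT ?orbF /=; ring.
- have iW : (i \in W) = false by apply/negP => /Wsub; rewrite iT.
  rewrite (hq1 j jT) (hq2 i) ?iT // iW /=.
  case: (j \in W); rewrite ?andbF ?andbT ?orbF /=; ring.
- have jW : (j \in W) = false by apply/negP => /Wsub; rewrite jT.
  have iW : (i \in W) = false by apply/negP => /Wsub; rewrite iT.
  rewrite (hq2 i) ?iT // (hq2 j) ?jT // iW jW ?andbF ?andbT ?orbF /=; ring.
Qed.

Lemma Lin_conv k (lam : 'I_k -> R) (p : 'I_k -> 'I_n -> R) :
  (forall i, x i = \sum_(t < k) lam t * p t i) ->
  \sum_(t < k) lam t * Lin (p t) = Lin x.
Proof.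
move=> hxp; rewrite /Lin.
under eq_bigr do rewrite mulr_sumr.
rewrite exchange_big /=; apply eq_bigr => i _.
under eq_bigr do rewrite mulr_sumr.
rewrite exchange_big /=; apply eq_bigr => j _.
rewrite !hxp !mulr_sumr -big_split /= mulr_sumr; apply eq_bigr => t _; ring.
Qed.

Lemma feas k (lam : 'I_k -> R) (p : 'I_k -> 'I_n -> R) :
  (forall t, 0 <= lam t) -> \sum_(t < k) lam t = 1 ->
  (forall t i, 0 <= p t i <= 1) ->
  (forall i, x i = \sum_(t < k) lam t * p t i) ->
  forall t, lam t != 0 -> forall i, i \notin Tf -> p t i = x i.
Proof.
move=> hl hs hp hxp t lt i iT.
case: (classify i) => [[xi _ iT']|[xi _ iT']|[xi _ iT']].
- have h0 : lam t * p t i = 0.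
    apply: (@psumr_eq0P _ _ xpredT (fun s => lam s * p s i)) => //.
      by move=> s _; apply: mulr_ge0 => //; case/andP: (hp s i).
    by rewrite -hxp xi.
  by move/eqP: h0; rewrite mulf_eq0 (negbTE lt) /= xi => /eqP.
- by rewrite iT' in iT.
- have h0 : lam t * (1 - p t i) = 0.
    apply: (@psumr_eq0P _ _ xpredT (fun s => lam s * (1 - p s i))) => //.
      by move=> s _; apply: mulr_ge0 => //; case/andP: (hp s i); rewrite subr_ge0.
    under eq_bigr do rewrite mulrBr mulr1.
    by rewrite sumrB -hxp xi hs subrr.
  by move/eqP: h0; rewrite mulf_eq0 (negbTE lt) /= subr_eq0 xi => /eqP <-.
Qed.

Lemma bigmax_ge (I : finType) (P : pred I) (F : I -> R) y0 i :
  P i -> F i <= \big[Num.max/y0]_(j | P j) F j.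
Proof.
move=> Pi; have : i \in index_enum I by rewrite mem_index_enum.
elim: (index_enum I) => [//|y r IH]; rewrite inE big_cons => /orP[/eqP<-|ir].
  by rewrite Pi le_max lexx.
by case: (P y); rewrite ?le_max IH ?orbT.
Qed.

Lemma bigmin_le (I : finType) (P : pred I) (F : I -> R) y0 i :
  P i -> \big[Num.min/y0]_(j | P j) F j <= F i.
Proof.
move=> Pi; have : i \in index_enum I by rewrite mem_index_enum.
elim: (index_enum I) => [//|y r IH]; rewrite inE big_cons => /orP[/eqP<-|ir].
  by rewrite Pi ge_min lexx.
by case: (P y); rewrite ?ge_min IH ?orbT.
Qed.

Lemma bigmax_attain (I : finType) (P : pred I) (F : I -> R) y0 :
  (exists2 i0, P i0 & y0 = F i0) ->
  exists2 i, P i & \big[Num.max/y0]_(j | P j) F j = F i.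
Proof.
move=> h0; apply: (big_ind (fun y => exists2 i, P i & y = F i)) => //.
  move=> y z [i Pi ->] [j Pj ->]; case: (leP (F i) (F j)) => h.
    by exists j => //; apply: max_r.
  by exists i => //; apply: max_l; apply: ltW.
by move=> i Pi; exists i.
Qed.

Lemma bigmin_attain (I : finType) (P : pred I) (F : I -> R) y0 :
  (exists2 i0, P i0 & y0 = F i0) ->
  exists2 i, P i & \big[Num.min/y0]_(j | P j) F j = F i.
Proof.
move=> h0; apply: (big_ind (fun y => exists2 i, P i & y = F i)) => //.
  move=> y z [i Pi ->] [j Pj ->]; case: (leP (F i) (F j)) => h.
    by exists i => //; apply: min_l.
  by exists j => //; apply: min_r; apply: ltW.
by move=> i Pi; exists i.
Qed.

Definition mup := mu_plus E a Tf.
Definition mum := mu_minus E a Tf.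

Lemma G_bounds p : (forall i, i \in Tf -> 0 <= p i <= 1) ->
  (forall i, i \notin Tf -> p i = x i) ->
  2^-1 * mum <= G p /\ G p <= 2^-1 * mup.
Proof.
move=> hb hf.
have key : forall q, (forall i, i \in Tf -> (q i == 0) || (q i == 1)) ->
    (forall i, i \notin Tf -> q i = p i) ->
    exists2 W, W \in powerset Tf & G q = 2^-1 * a_delta E a W (Tf :\: W).
  move=> q hq hq'; exists [set i in Tf | q i == 1].
    by rewrite powersetE; apply/subsetP => i; rewrite inE => /andP[].
  apply: G_vert.
  - by apply/subsetP => i; rewrite inE => /andP[].
  - move=> i iT; rewrite inE iT /=.
    by case/orP: (hq i iT) => /eqP ->; rewrite ?eqxx // eq_sym oner_eq0.
  - by move=> i iT; rewrite hq' // hf.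
split.
- rewrite -subr_ge0.
  apply: (@vertex (fun p => G p - 2^-1 * mum) _ Tf p hb).
    by move=> k p'; rewrite (G_aff k p'); ring.
  move=> q hq hq'; case: (key q hq hq') => W hW ->.
  rewrite subr_ge0 ler_wpM2l // ?invr_ge0 ?ler0n //.
  by rewrite /mum /mu_minus; apply: (bigmin_le (P := fun U => U \in powerset Tf)) .
- rewrite -subr_ge0.
  apply: (@vertex (fun p => 2^-1 * mup - G p) _ Tf p hb).
    by move=> k p'; rewrite (G_aff k p'); ring.
  move=> q hq hq'; case: (key q hq hq') => W hW ->.
  rewrite subr_ge0 ler_wpM2l // ?invr_ge0 ?ler0n //.
  rewrite /mup /mu_plus. exact: (@bigmax_ge _ (fun U => U \in powerset Tf) (fun U => a_delta E a U (Tf :\: U)) _ W hW).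
Qed.

Lemma bilin_LG p : bilin E a p = Lin p - G p.
Proof. rewrite /G; ring. Qed.

Lemma vex_lb z : in_convB E a x z -> base - 2^-1 * mup <= z.
Proof.
case=> k [lam] [p] [hl hs hp hxp ->].
have e : \sum_(t < k) lam t * bilin E a (p t) = Lin x - \sum_(t < k) lam t * G (p t).
  rewrite -(Lin_conv hxp) -sumrB; apply eq_bigr => t _; rewrite bilin_LG; ring.
rewrite e Lin_x lerD2l lerN2; set c := 2^-1 * mup; rewrite -[c]mul1r -hs mulr_suml.
apply: ler_sum => t _.
have [->|lt] := eqVneq (lam t) 0; first by rewrite !mul0r.
have hG := G_bounds (fun i _ => hp t i) (feas hl hs hp hxp lt).
by apply: ler_wpM2l => //; exact: (proj2 hG).
Qed.

Lemma cav_ub z : in_convB E a x z -> z <= base - 2^-1 * mum.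
Proof.
case=> k [lam] [p] [hl hs hp hxp ->].
have e : \sum_(t < k) lam t * bilin E a (p t) = Lin x - \sum_(t < k) lam t * G (p t).
  rewrite -(Lin_conv hxp) -sumrB; apply eq_bigr => t _; rewrite bilin_LG; ring.
rewrite e Lin_x lerD2l lerN2; set c := 2^-1 * mum; rewrite -[c]mul1r -hs mulr_suml.
apply: ler_sum => t _.
have [->|lt] := eqVneq (lam t) 0; first by rewrite !mul0r.
have hG := G_bounds (fun i _ => hp t i) (feas hl hs hp hxp lt).
by apply: ler_wpM2l => //; exact: (proj1 hG).
Qed.

Definition qv (W : {set 'I_n}) i := if i \in Tf then (if i \in W then 1 else 0) else x i.

Lemma G_qv (W : {set 'I_n}) : W \subset Tf -> G (qv W) = 2^-1 * a_delta E a W (Tf :\: W).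
Proof.
move=> hW; apply: G_vert => // i iT; by rewrite /qv ?iT ?(negbTE iT).
Qed.

Lemma a_deltaC (X Y : {set 'I_n}) : a_delta E a X Y = a_delta E a Y X.
Proof. apply eq_bigr => i _; apply: eq_bigl => j; by rewrite orbC. Qed.

Lemma achieve (U : {set 'I_n}) : U \subset Tf ->
  in_convB E a x (base - 2^-1 * a_delta E a U (Tf :\: U)).
Proof.
move=> hU.
pose p := fun (t : 'I_2) => if val t == 0%N then qv U else qv (Tf :\: U).
have hxb : forall i, i \notin Tf -> 0 <= x i <= 1.
  by move=> i iT; case: (classify i) => -[-> _ h]; rewrite ?lexx ?ler01 //; rewrite h in iT.
have hxp : forall i, x i = \sum_(t < 2) 2^-1 * p t i.
  move=> i; rewrite !big_ord_recl big_ord0 /p /= /qv.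
  case iT: (i \in Tf); last by field.
  move: (iT); rewrite inE => /eqP ->; rewrite in_setD iT andbT.
  by case: (i \in U) => /=; field.
exists 2%N, (fun _ => 2^-1), p; split.
- by move=> _; rewrite invr_ge0 ler0n.
- by rewrite !big_ord_recl big_ord0; field.
- move=> t i; rewrite /p /qv; case: ifP => _; case: ifP => iT;
    try (case: ifP => _); rewrite ?lexx ?ler01 //; by apply: hxb; rewrite iT.
- move=> i; exact (hxp i).
- rewrite (eq_bigr (fun t => 2^-1 * Lin (p t) - 2^-1 * G (p t))); last first.
    by move=> t _; rewrite bilin_LG; ring.
  rewrite sumrB (Lin_conv hxp) Lin_x !big_ord_recl big_ord0 /p /=.
  rewrite G_qv // G_qv ?subsetDl //.
  have -> : Tf :\: (Tf :\: U) = U.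
    by rewrite setDDr setDv set0U; apply/setIidPr.
  rewrite [a_delta E a (Tf :\: U) U]a_deltaC; by field.
Qed.

Lemma main :
  [/\ is_vex E a x (base - 2^-1 * mu_plus E a Tf),
      is_cav E a x (base - 2^-1 * mu_minus E a Tf)
    & forall v c, is_vex E a x v -> is_cav E a x c ->
        c - v = 2^-1 * (mu_plus E a Tf - mu_minus E a Tf)].
Proof.
have [U hU eU] : exists2 U, U \in powerset Tf & mup = a_delta E a U (Tf :\: U).
  rewrite /mup /mu_plus; apply: bigmax_attain.
  by exists set0; rewrite ?powersetE ?sub0set ?setD0.
have [V hV eV] : exists2 U, U \in powerset Tf & mum = a_delta E a U (Tf :\: U).
  rewrite /mum /mu_minus; apply: bigmin_attain.
  by exists set0; rewrite ?powersetE ?sub0set ?setD0.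
have hvex : is_vex E a x (base - 2^-1 * mup).
  split; last exact: vex_lb.
  by rewrite eU; apply: achieve; rewrite -powersetE.
have hcav : is_cav E a x (base - 2^-1 * mum).
  split; last exact: cav_ub.
  by rewrite eV; apply: achieve; rewrite -powersetE.
split => // v c [hv1 hv2] [hc1 hc2].
have ev : v = base - 2^-1 * mup.
  by apply/eqP; rewrite eq_le (vex_lb hv1) andbT; apply: hv2; case: hvex.
have ec : c = base - 2^-1 * mum.
  by apply/eqP; rewrite eq_le (cav_ub hc1) /=; apply: hc2; case: hcav.
rewrite ev ec /mup /mum; ring.
Qed.
End Aux.

Theorem lemma1 (R : realFieldType) (n : nat) (E : rel 'I_n)
  (a : 'I_n -> 'I_n -> R) (x : 'I_n -> R)
  (hx : forall i, [\/ x i = 0, x i = 2^-1 | x i = 1]) :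
  let T1 := [set i | x i == 1] in
  let Tf := [set i | x i == 2^-1] in
  let base := a_gamma E a T1 + 2^-1 * a_delta E a T1 Tf + 2^-1 * a_gamma E a Tf in
  [/\ is_vex E a x (base - 2^-1 * mu_plus E a Tf),
      is_cav E a x (base - 2^-1 * mu_minus E a Tf)
    & forall v c, is_vex E a x v -> is_cav E a x c ->
        c - v = 2^-1 * (mu_plus E a Tf - mu_minus E a Tf)].
Proof. move=> T1' Tf' base'; exact: (main E a hx). Qed.
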